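(* Let $\mathcal H$ be an $n$-dimensional (real or complex) inner product space, $P:\mathcal H\to\mathcal H$ a linear projection ($P^2=P$) and $Q=I-P$. Let $r_0$ and $r_1$ be the multiplicities of the eigenvalues $0$ and $1$ of $P^\dagger P$ (zero if not an eigenvalue). Then $Q^\dagger Q$ has eigenvalue $0$ with multiplicity $n-r_0$ and eigenvalue $1$ with multiplicity $2r_0+r_1-n$.
   Context: $P^\dagger$, $Q^\dagger$ denote adjoints with respect to the inner product; $P$ need not be an orthogonal projection; $I$ is the identity. Multiplicities are those of eigenvalues of the self-adjoint positive semidefinite operators $P^\dagger P$, $Q^\dagger Q$. *)

(* Defs.v *)
From HB Require Import structures.
From mathcomp Require Import all_boot all_order all_algebra.
Set Implicit Arguments. Unset Strict Implicit. Unset Printing Implicit Defensive.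
Import Order.TTheory GRing.Theory Num.Theory.
Local Open Scope ring_scope.

Definition cadj (C : numClosedFieldType) (n : nat) (A : 'M[C]_n) : 'M[C]_n :=
  (map_mx Num.conj A)^T.

(* Multiplicity of a as an eigenvalue of A: dimension of its eigenspace
   (0 if a is not an eigenvalue).  For self-adjoint matrices this equals the
   algebraic multiplicity. *)
Definition eigmult (F : fieldType) (n : nat) (A : 'M[F]_n) (a : F) : nat :=
  \rank (eigenspace A a).

(* Main.v *)
Require Import Defs.
From HB Require Import structures.
From mathcomp Require Import all_boot all_order all_algebra.
From mathcomp Require Import zify.
Import Order.TTheory GRing.Theory Num.Theory.
Local Open Scope ring_scope.

Set Implicit Arguments. Unset Strict Implicit.

Record adjOK (F : fieldType) (n : nat) (adj : 'M[F]_n -> 'M[F]_n) := {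
  adjM : forall A B, adj (A *m B) = adj B *m adj A;
  adjK : forall A, adj (adj A) = A;
  adjB : forall A B, adj (A - B) = adj A - adj B;
  adj1 : adj 1%:M = 1%:M;
  adj_pos : forall A, A *m adj A = 0 -> A = 0;
  adj_rank : forall A B, \rank (row_mx A B) = \rank (col_mx (adj A) (adj B));
  adj_rank1 : forall A, \rank (adj A) = \rank A }.

Lemma rank_ker_eq (F : fieldType) n p q (X : 'M[F]_(n,p)) (Y : 'M[F]_(n,q)) :
  (forall M : 'M[F]_n, M *m X = 0 <-> M *m Y = 0) -> \rank X = \rank Y.
Proof.
move=> H.
have h1 : (\rank (kermx X) <= \rank (kermx Y))%N.
  by apply: mxrankS; apply/sub_kermxP; apply/H; exact: mulmx_ker.
have h2 : (\rank (kermx Y) <= \rank (kermx X))%N.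
  by apply: mxrankS; apply/sub_kermxP; apply/H; exact: mulmx_ker.
rewrite !mxrank_ker in h1 h2.
have h3 := rank_leq_row X; have h4 := rank_leq_row Y. lia.
Qed.

Lemma rank_sub_eq (F : fieldType) m1 m2 n (A : 'M[F]_(m1, n)) (B : 'M[F]_(m2, n)) :
  (A <= B)%MS -> (B <= A)%MS -> \rank A = \rank B.
Proof. by move=> h1 h2; apply/eqP; rewrite eqn_leq !mxrankS. Qed.


Lemma adj0 (F : fieldType) n adj (h : @adjOK F n adj) : adj 0 = 0.
Proof. by have := adjB h 0 0; rewrite !subrr. Qed.

Lemma rank_AtA (F : fieldType) n adj (h : @adjOK F n adj) (X : 'M[F]_n) :
  \rank (adj X *m X) = \rank X.
Proof.
rewrite -(adj_rank1 h X); apply: rank_ker_eq => M; split => HM.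
- have HW : (M *m adj X) *m adj (M *m adj X) = 0.
    by rewrite (adjM h) (adjK h) mulmxA -(mulmxA M) HM mul0mx.
  exact: (adj_pos h HW).
- by rewrite mulmxA HM mul0mx.
Qed.

Lemma idem_rank (F : fieldType) n (P : 'M[F]_n) :
  P *m P = P -> (\rank P + \rank (1%:M - P)%R)%N = n.
Proof.
move=> hP.
have -> : \rank (1%:M - P)%R = \rank (kermx P).
  apply: rank_sub_eq.
    by apply/sub_kermxP; rewrite mulmxBl mul1mx hP subrr.
  have hK : kermx P = kermx P *m (1%:M - P).
    by rewrite mulmxBr mulmx1 mulmx_ker subr0.
  by rewrite hK submxMl.
rewrite mxrank_ker; have h3 := rank_leq_row P; lia.
Qed.

Lemma expand_id (F : fieldType) n (A B : 'M[F]_n) :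
  (1%:M - B) *m (1%:M - A) - 1%:M = B *m A - A - B.
Proof.
rewrite !mulmxBl !mulmxBr !mul1mx !mulmx1.
rewrite opprB addrAC [1%:M - A - 1%:M]addrAC subrr add0r addrC addrAC.
done.
Qed.

Lemma E1_rank (F : fieldType) n adj (h : @adjOK F n adj) (P : 'M[F]_n) :
  P *m P = P ->
  \rank (adj (1%:M - P) *m (1%:M - P) - 1%:M) = \rank (row_mx P (adj P)).
Proof.
move=> hP.
rewrite (adjB h) (adj1 h) expand_id.
apply: rank_ker_eq => M; rewrite mul_mx_row; split => HM.
- have e1 : M *m adj P *m P = M *m P + M *m adj P.
    apply/eqP; rewrite -subr_eq0 opprD addrA.
    by rewrite -!mulmxA -!mulmxBr HM.
  have eMP : M *m P = 0.
    have := congr1 (mulmx^~ P) e1.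
    rewrite -!mulmxA hP mulmxDl -!mulmxA hP !mulmxA.
    move=> e; have := congr1 (fun Z => Z - M *m adj P *m P) e.
    by rewrite subrr addrK.
  have e2 : M *m adj P *m P = M *m adj P by rewrite e1 eMP add0r.
  have HW : (M *m adj P) *m adj (M *m adj P) = 0.
    rewrite (adjM h) (adjK h) mulmxA e2 -mulmxA -(adjM h) eMP.
    by rewrite (adj0 h) mulmx0.
  by rewrite eMP (adj_pos h HW); apply/eqP; rewrite row_mx_eq0 !eqxx.
- move/eqP: HM; rewrite row_mx_eq0 => /andP[/eqP H1 /eqP H2].
  by rewrite !mulmxBr mulmxA H1 H2 mul0mx !subrr.
Qed.

Lemma idem_sub (F : fieldType) m n (P : 'M[F]_n) (A : 'M[F]_(m, n)) :
  P *m P = P -> (A <= P)%MS = (A *m (1%:M - P) == 0).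
Proof.
move=> hP; apply/idP/eqP.
- by case/submxP => D ->; rewrite -mulmxA mulmxBr mulmx1 hP subrr mulmx0.
- rewrite mulmxBr mulmx1 => /eqP; rewrite subr_eq0 => /eqP ->.
  exact: submxMl.
Qed.

Lemma adj_idem (F : fieldType) n adj (h : @adjOK F n adj) (P : 'M[F]_n) :
  P *m P = P -> adj P *m adj P = adj P.
Proof. by move=> hP; rewrite -(adjM h) hP. Qed.

Lemma cap_rank (F : fieldType) n adj (h : @adjOK F n adj) (P : 'M[F]_n) :
  P *m P = P ->
  \rank (adj P :&: P)%MS = \rank (kermx (row_mx (1%:M - P) (adj (1%:M - P)))).
Proof.
move=> hP; have hP' := adj_idem h hP.
rewrite (adjB h) (adj1 h).
apply: rank_sub_eq.
- apply/sub_kermxP; rewrite mul_mx_row; apply/eqP; rewrite row_mx_eq0.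
  by rewrite -!idem_sub // ?capmxSl ?capmxSr.
- have := mulmx_ker (row_mx (1%:M - P) (1%:M - adj P)).
  rewrite mul_mx_row => /eqP; rewrite row_mx_eq0 => /andP[e1 e2].
  by rewrite sub_capmx !idem_sub // e1 e2.
Qed.

Lemma scal0 (F : fieldType) n : (0 : F)%:M = 0 :> 'M[F]_n.
Proof. by apply/matrixP => i j; rewrite !mxE mul0rn. Qed.

Lemma eigmultE (F : fieldType) n (A : 'M[F]_n) a :
  eigmult A a = (n - \rank (A - a%:M)%R)%N.
Proof. by rewrite /eigmult /eigenspace mxrank_ker. Qed.

Lemma arith (n k C c R : nat) : (R <= n)%N -> (C <= n)%N -> c = (n - R)%N ->
  (C + c)%N = (k + k)%N ->
  ((n - C)%N)%:Z = 2 * ((n - k)%N)%:Z + ((n - R)%N)%:Z - n%:Z.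
Proof. lia. Qed.

Lemma main_gen (F : fieldType) n adj (h : @adjOK F n adj) (P : 'M[F]_n) :
  P *m P = P ->
  eigmult (adj (1%:M - P) *m (1%:M - P)) 0 = (n - eigmult (adj P *m P) 0)%N /\
  (eigmult (adj (1%:M - P) *m (1%:M - P)) 1)%:Z =
    2 * (eigmult (adj P *m P) 0)%:Z + (eigmult (adj P *m P) 1)%:Z - n%:Z.
Proof.
move=> hP.
have hQ : (1%:M - P) *m (1%:M - P) = 1%:M - P.
  by rewrite mulmxBl mul1mx mulmxBr mulmx1 hP subrr subr0.
have hPQ : P = 1%:M - (1%:M - P) by rewrite subKr.
rewrite !eigmultE scal0 !subr0 !rank_AtA //.
have hk := idem_rank hP.
have e1 := E1_rank h hP.
have e2 := E1_rank h hQ. rewrite -hPQ in e2.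
have e3 := cap_rank h hP.
rewrite mxrank_ker in e3.
rewrite (adj_rank h) (adjK h) in e1.
have e4 := mxrank_sum_cap (adj P) P.
rewrite (addsmxE (adj P) P) in e4.
rewrite (adj_rank1 h) in e4.
have b1 := rank_leq_row (row_mx (1%:M - P) (adj (1%:M - P))).
have b2 := rank_leq_col (col_mx (adj P) P).

rewrite e1 e2.
split; [lia|].
exact: (arith b1 b2 e3 e4).
Qed.

Lemma cadj_ok (C : numClosedFieldType) n : adjOK (@cadj C n).
Proof.
split.
- by move=> A B; rewrite /cadj map_mxM trmx_mul.
- by move=> A; apply/matrixP => i j; rewrite !mxE conjCK.
- by move=> A B; apply/matrixP => i j; rewrite !mxE rmorphB.
- by rewrite /cadj map_mx1 trmx1.
- move=> A HA; apply/matrixP => i j.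
  have := congr1 (fun M : 'M_n => M i i) HA; rewrite !mxE => hs.
  have hs' : \sum_k `|A i k| ^+ 2 = 0.
    by rewrite -[RHS]hs; apply: eq_bigr => k _; rewrite normCK !mxE.
  have hz : forall k, true -> 0 <= `|A i k| ^+ 2 by move=> k _; exact: exprn_ge0.
  have : `|A i j| ^+ 2 = 0 := psumr_eq0P hz hs' (i:=j) isT.
  move/eqP; rewrite sqrf_eq0 normr_eq0 => /eqP ->; reflexivity.
- by move=> A B; rewrite /cadj -tr_row_mx -map_row_mx mxrank_tr mxrank_map.
- by move=> A; rewrite /cadj mxrank_tr mxrank_map.
Qed.

Lemma tr_ok (R : rcfType) n : adjOK (@trmx R n n).
Proof.
split.
- by move=> A B; rewrite trmx_mul.
- by move=> A; rewrite trmxK.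
- by move=> A B; apply/matrixP => i j; rewrite !mxE.
- by rewrite trmx1.
- move=> A HA; apply/matrixP => i j.
  have := congr1 (fun M : 'M_n => M i i) HA; rewrite !mxE => hs.
  have hs' : \sum_k (A i k) ^+ 2 = 0.
    by rewrite -[RHS]hs; apply: eq_bigr => k _; rewrite expr2 !mxE.
  have hz : forall k, true -> 0 <= (A i k) ^+ 2 by move=> k _; exact: sqr_ge0.
  have : (A i j) ^+ 2 = 0 := psumr_eq0P hz hs' (i:=j) isT.
  move/eqP; rewrite sqrf_eq0 => /eqP ->; reflexivity.
- by move=> A B; rewrite -tr_row_mx mxrank_tr.
- by move=> A; rewrite mxrank_tr.
Qed.

Theorem theorem13 :
  (* complex case: H = C^n with the standard inner product, adjoint = conjugate transpose *)
  (forall (C : numClosedFieldType) (n : nat) (P : 'M[C]_n),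
    P *m P = P ->
    let Q := 1%:M - P in
    let r0 := eigmult (cadj P *m P) 0 in
    let r1 := eigmult (cadj P *m P) 1 in
    eigmult (cadj Q *m Q) 0 = (n - r0)%N /\
    (eigmult (cadj Q *m Q) 1)%:Z = 2 * r0%:Z + r1%:Z - n%:Z)
  /\
  (* real case: H = R^n with the standard inner product, adjoint = transpose *)
  (forall (R : rcfType) (n : nat) (P : 'M[R]_n),
    P *m P = P ->
    let Q := 1%:M - P in
    let r0 := eigmult (P^T *m P) 0 in
    let r1 := eigmult (P^T *m P) 1 in
    eigmult (Q^T *m Q) 0 = (n - r0)%N /\
    (eigmult (Q^T *m Q) 1)%:Z = 2 * r0%:Z + r1%:Z - n%:Z).
Proof.
split.
- move=> C n P hP; exact: (main_gen (cadj_ok C n) hP).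
- move=> R n P hP; exact: (main_gen (tr_ok R n) hP).
Qed.
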